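(* For every hereditary class property $\Pi$, we have $(\Pi^+)^+=\Pi^+$ and $(\Pi^\ast)^+=\Pi^\ast$.
   Context: Graphs are finite and simple. A hereditary class is a class closed under isomorphism and induced subgraphs; a hereditary class property is a set $\Pi$ of hereditary classes such that $\mathscr C\in\Pi$, $\mathscr D$ hereditary, $\mathscr D\subseteq\mathscr C$ imply $\mathscr D\in\Pi$. For non-decreasing $f:\mathbb N\to\mathbb N$ and positive integer $p$, $\mathscr C$ has an $f$-bounded $\Pi$-decomposition with parameter $p$ if there is $\mathscr D_p\in\Pi$ such that every $G\in\mathscr C$ has a partition $V_1,\dots,V_N$ of $V(G)$ with $N\le f(|G|)$ and $G[V_{i_1}\cup\dots\cup V_{i_p}]\in\mathscr D_p$ for all $i_1,\dots,i_p\in[N]$. $\Pi^+$ (resp. $\Pi^\ast$) is the set of hereditary classes that, for every positive integer $p$, have an $f$-bounded $\Pi$-decomposition with parameter $p$ for some constant function $f$ (resp. some non-decreasing $f$ with $f(n)=n^{o(1)}$). *)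

(* Defs.v *)
From Stdlib Require Import Reals.
From mathcomp Require Import all_boot.

Set Implicit Arguments.
Unset Strict Implicit.
Unset Printing Implicit Defensive.

Record graph := Graph {
  gsize : nat;
  gadj : rel 'I_gsize;
  gsym : symmetric gadj;
  girr : irreflexive gadj }.

Definition giso (G H : graph) : Prop :=
  exists f : 'I_(gsize G) -> 'I_(gsize H),
    bijective f /\ forall x y, @gadj H (f x) (f y) = @gadj G x y.

Definition induced_adj (G : graph) (S : {set 'I_(gsize G)}) : rel 'I_#|S| :=
  fun i j => @gadj G (enum_val i) (enum_val j).

Lemma induced_sym (G : graph) (S : {set 'I_(gsize G)}) :
  symmetric (@induced_adj G S).
Proof. by move=> i j; rewrite /induced_adj gsym. Qed.

Lemma induced_irr (G : graph) (S : {set 'I_(gsize G)}) :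
  irreflexive (@induced_adj G S).
Proof. by move=> i; rewrite /induced_adj girr. Qed.

Definition induced (G : graph) (S : {set 'I_(gsize G)}) : graph :=
  @Graph #|S| (@induced_adj G S) (@induced_sym G S) (@induced_irr G S).

Definition gclass := graph -> Prop.

Definition hereditary (C : gclass) : Prop :=
  (forall G H, giso G H -> C G -> C H) /\
  (forall G (S : {set 'I_(gsize G)}), C G -> C (@induced G S)).

Definition subclass (D C : gclass) : Prop := forall G, D G -> C G.

Definition class_prop := gclass -> Prop.

Definition hereditary_property (P : class_prop) : Prop :=
  (forall C, P C -> hereditary C) /\
  (forall C D, P C -> hereditary D -> subclass D C -> P D).

(* f-bounded P-decomposition with parameter p.  A partition V_1..V_N of V(G)
   is given by the map c sending a vertex to the index of its part. *)
Definition has_decomp (P : class_prop) (C : gclass) (f : nat -> nat) (p : nat) : Prop :=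
  exists Dp : gclass, P Dp /\
    forall G, C G ->
      exists (N : nat) (c : 'I_(gsize G) -> 'I_N),
        N <= f (gsize G) /\
        forall ix : 'I_p -> 'I_N,
          Dp (@induced G [set v | [exists k, c v == ix k]]).

Definition nondecr (f : nat -> nat) : Prop := forall m n, m <= n -> f m <= f n.

(* f(n) = n^{o(1)}: for every eps > 0, eventually f(n) <= n^eps. *)
Definition subpoly (f : nat -> nat) : Prop :=
  forall eps : R, Rlt 0 eps ->
    exists n0 : nat, forall n, n0 <= n -> Rle (INR (f n)) (Rpower (INR n) eps).

Definition plus_prop (P : class_prop) : class_prop := fun C =>
  hereditary C /\
  forall p, 0 < p -> exists K : nat, has_decomp P C (fun _ => K) p.

Definition star_prop (P : class_prop) : class_prop := fun C =>
  hereditary C /\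
  forall p, 0 < p -> exists f, nondecr f /\ subpoly f /\ has_decomp P C f p.

(* Main.v *)
Require Import Defs.
From Stdlib Require Import Reals Lra IndefiniteDescription.
From mathcomp Require Import all_boot.


Lemma giso_sym G H : giso G H -> giso H G.
Proof.
case=> f [[g fg gf] hadj]; exists g; split; first by exists f.
by move=> x y; rewrite -hadj !gf.
Qed.

Lemma giso_empty G H : gsize G = 0 -> gsize H = 0 -> giso G H.
Proof.
move=> hG hH.
have f : 'I_(gsize G) -> 'I_(gsize H) by by case=> m; rewrite hG.
have g : 'I_(gsize H) -> 'I_(gsize G) by by case=> m; rewrite hH.
exists f; split.
  by exists g; case=> m hm; exfalso; move: hm; rewrite ?hG ?hH.
by by case=> m hm; exfalso; move: hm; rewrite hG.
Qed.

Section Iso.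
Variables (G : graph) (A B : {set 'I_(gsize G)}).
Hypothesis sBA : B \subset A.
Let A' : {set 'I_#|A|} := [set w | enum_val w \in B].

Lemma memA' (i : 'I_#|A'|) : enum_val (enum_val i) \in B.
Proof. by have := enum_valP i; rewrite inE. Qed.

Lemma memB (j : 'I_#|B|) : enum_val j \in A.
Proof. exact: (subsetP sBA _ (enum_valP j)). Qed.

Lemma memB' (j : 'I_#|B|) : enum_rank_in (memB j) (enum_val j) \in A'.
Proof. by rewrite inE enum_rankK_in ?memB // enum_valP. Qed.

Definition isoF (i : 'I_#|A'|) : 'I_#|B| := enum_rank_in (memA' i) (enum_val (enum_val i)).
Definition isoG (j : 'I_#|B|) : 'I_#|A'| := enum_rank_in (memB' j) (enum_rank_in (memB j) (enum_val j)).

Lemma isoF_val i : enum_val (isoF i) = enum_val (enum_val i).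
Proof. by rewrite /isoF enum_rankK_in ?memA'. Qed.

Lemma isoG_val j : enum_val (enum_val (isoG j)) = enum_val j.
Proof. by rewrite /isoG enum_rankK_in ?memB' // enum_rankK_in ?memB. Qed.

Lemma induced_sub_iso : giso (@induced (@induced G A) A') (@induced G B).
Proof.
exists isoF; split.
  exists isoG => x; apply: enum_val_inj.
    by apply: enum_val_inj; rewrite isoG_val isoF_val.
  by rewrite isoF_val isoG_val.
by move=> x y; rewrite /= /induced_adj /= /induced_adj !isoF_val.
Qed.
End Iso.

Lemma refine (E : gclass) (hE : hereditary E) (G : graph) (N B p : nat) (hp : 0 < p)
  (c : 'I_(gsize G) -> 'I_N)
  (sub : forall ix : 'I_p -> 'I_N, exists (N' : nat)
     (c' : 'I_(gsize (@induced G [set v | [exists k, c v == ix k]])) -> 'I_N'),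
     N' <= B /\ forall jx : 'I_p -> 'I_N',
       E (@induced (@induced G [set v | [exists k, c v == ix k]]) [set w | [exists k, c' w == jx k]])) :
  exists (N2 : nat) (c2 : 'I_(gsize G) -> 'I_N2), N2 <= N * B.+1 ^ (N ^ p) /\
    forall jx : 'I_p -> 'I_N2, E (@induced G [set v | [exists k, c2 v == jx k]]).
Proof.
pose U (ix : 'I_p -> 'I_N) := [set v | [exists k, c v == ix k]].
have sub' : forall ix, {N' : nat & {c' : 'I_#|U ix| -> 'I_N' | N' <= B /\ forall jx : 'I_p -> 'I_N',
       E (@induced (@induced G (U ix)) [set w | [exists k, c' w == jx k]])}}.
  move=> ix; have [N' h] := constructive_indefinite_description _ (sub ix).
  have [c' h'] := constructive_indefinite_description _ h.
  by exists N', c'.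
pose Nf ix := projT1 (sub' ix).
pose cf ix : 'I_#|U ix| -> 'I_(Nf ix) := proj1_sig (projT2 (sub' ix)).
have hNf ix : Nf ix <= B := (proj2_sig (projT2 (sub' ix))).1.
have hcf ix jx : E (@induced (@induced G (U ix)) [set w | [exists k, cf ix w == jx k]])
  := (proj2_sig (projT2 (sub' ix))).2 jx.
clearbody Nf cf; clear sub sub'.
have [hn0|hn] := posnP (gsize G).
  have c2 : 'I_(gsize G) -> 'I_0 by case=> m; rewrite hn0.
  exists 0, c2; split => // jx; by case: (jx (Ordinal hp)).
pose v0 : 'I_(gsize G) := Ordinal hn.
pose labf (ix : 'I_p -> 'I_N) (v : 'I_(gsize G)) : 'I_B.+1 :=
  if [pick w : 'I_#|U ix| | enum_val w == v] is Some w then inord (cf ix w) else ord0.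
pose T : finType := ('I_N * {ffun {ffun 'I_p -> 'I_N} -> 'I_B.+1})%type.
pose lab v : T := (c v, [ffun ixf : {ffun 'I_p -> 'I_N} => labf (fun k => ixf k) v]).
exists #|T|, (fun v => enum_rank (lab v)); split.
  by rewrite card_prod !card_ffun !card_ord.
move=> jx; set S := [set v | _].
pose jl k := enum_val (jx k) : T.
have inS v : (v \in S) = [exists k, lab v == jl k].
  rewrite inE; apply: eq_existsb => k.
  by rewrite /jl -{1}(enum_valK (jx k)) (inj_eq enum_rank_inj).
pose ixf := [ffun k => (jl k).1].
pose ix := fun k => ixf k.
have SU : S \subset U ix.
  apply/subsetP => v; rewrite inS inE => /existsP [k /eqP hk].
  by apply/existsP; exists k; rewrite /ix ffunE -hk.
case: (set_0Vmem S) => [S0 | [v1 v1S]].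
  pose ix0 := fun _ : 'I_p => c v0.
  have v0U : v0 \in U ix0 by rewrite inE; apply/existsP; exists (Ordinal hp).
  pose w0 := enum_rank_in v0U v0.
  have E1 := hcf ix0 (fun _ => cf ix0 w0).
  have E2 := hE.2 _ set0 E1.
  apply: (hE.1 _ _ _ E2); apply: giso_empty => /=; by rewrite ?S0 cards0.
have v1U : v1 \in U ix by apply: (subsetP SU).
pose w1 := enum_rank_in v1U v1.
pose jx' k : 'I_(Nf ix) := insubd (cf ix w1) (val ((jl k).2 ixf)).
pose H := @induced G (U ix).
pose T' : {set 'I_(gsize H)} := [set w | [exists k, cf ix w == jx' k]].
pose T'' : {set 'I_(gsize H)} := [set w | enum_val w \in S].
have sT : T'' \subset T'.
  apply/subsetP => w; rewrite inE inS => /existsP [k /eqP hk].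
  rewrite inE; apply/existsP; exists k; apply/eqP/val_inj.
  rewrite /jx' -hk /lab /= ffunE /labf.
  case: pickP => [w' /eqP hw' | hnone]; last by move: (hnone w); rewrite eqxx.
  have -> : w' = w by apply: enum_val_inj.
  rewrite inordK; last by apply: (leq_trans (ltn_ord _)); apply: (leq_trans (hNf ix)); exact: leqnSn.
  by rewrite insubdK // -topredE /= ltn_ord.
have E1 := hcf ix jx'.
have E2 := hE.2 (@induced H T') [set w : 'I_#|T'| | enum_val w \in T''] E1.
have E3 : E (@induced H T'') by apply: (hE.1 _ _ _ E2); apply: induced_sub_iso.
by apply: (hE.1 _ _ _ E3); apply: induced_sub_iso.
Qed.
Section RealPart.
Local Open Scope R_scope.

Lemma Rpower_pos x e : 0 < Rpower x e.
Proof. unfold Rpower; apply exp_pos. Qed.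

Lemma INR_expn a m : INR (a ^ m)%N = INR a ^ m.
Proof. elim: m => [|m IH] //=; by rewrite expnS -multE mult_INR IH. Qed.

Lemma subpoly_g f K M : subpoly f -> subpoly (fun n => K * (f n).+1 ^ M)%N.
Proof.
move=> hf eps heps.
have hM : (0 < INR M + 1) by have := pos_INR M; lra.
pose e1 := (eps / (2 * (INR M + 1))).
have he1 : (0 < e1) by rewrite /e1; apply: Rdiv_lt_0_compat; lra.
have he1M : (e1 * (INR M + 1) = eps / 2) by rewrite /e1; field; lra.
have [n0 hn0] := hf e1 he1.
pose C := (INR K * 2 ^ M).
have hC : (0 <= C) by rewrite /C; apply: Rmult_le_pos; [apply: pos_INR | apply: pow_le; lra].
pose y := Rpower (C + 1) (2 / eps).
have [n1 hn1] := INR_archimed 1 y Rlt_0_1.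
exists (maxn n0 (maxn n1 1)) => n hn.
have hn0n : (n0 <= n)%N by apply: leq_trans hn; rewrite leq_maxl.
have hn1n : (n1 <= n)%N by apply: leq_trans hn; rewrite !leq_max leqnn !orbT.
have h1n : (1 <= n)%N by apply: leq_trans hn; rewrite !leq_max leqnn !orbT.
pose x := INR n.
have hx1 : (1 <= x) by rewrite /x; apply: (le_INR 1); apply/leP.
have hyx : (y <= x).
  have : (INR n1 <= x) by rewrite /x; apply: le_INR; apply/leP.
  lra.
have hCx : (C <= Rpower x (eps / 2)).
  have : (Rpower y (eps / 2) <= Rpower x (eps / 2)).
    apply: Rle_Rpower_l; first lra.
    split; [exact: Rpower_pos | exact: hyx].
  rewrite /y Rpower_mult.
  have -> : (2 / eps * (eps / 2) = 1) by field; lra.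
  rewrite Rpower_1; lra.
have h1 : INR (f n) <= Rpower x e1 := hn0 n hn0n.
have h2 : (1 <= Rpower x e1).
  rewrite -(Rpower_O x); last lra.
  apply: Rle_Rpower; lra.
have h3 : ((INR (f n) + 1) ^ M <= Rpower x (eps / 2) * 2 ^ M).
  apply: Rle_trans (_ : (2 * Rpower x e1) ^ M <= _).
    apply: pow_incr; have := pos_INR (f n); split; lra.
  rewrite Rpow_mult_distr Rmult_comm; apply: Rmult_le_compat_r; first by apply: pow_le; lra.
  rewrite -Rpower_pow; last exact: Rpower_pos.
  rewrite Rpower_mult; apply: Rle_Rpower => //.
  have := pos_INR M; nra.
rewrite -multE mult_INR INR_expn S_INR.
have -> : eps = (eps / 2 + eps / 2) by field.
rewrite Rpower_plus.
apply: Rle_trans (_ : INR K * (Rpower x (eps / 2) * 2 ^ M) <= _).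
  apply: Rmult_le_compat_l => //; exact: pos_INR.
have : (0 <= Rpower x (eps / 2)) by apply: Rlt_le; exact: Rpower_pos.
rewrite /C in hCx; rewrite -/x; nra.
Qed.
End RealPart.

Lemma leq_expn2 m n e : m <= n -> m ^ e <= n ^ e.
Proof. by case: e => [|e] // h; rewrite leq_exp2r. Qed.

Lemma bound_mono N K B p : N <= K -> N * B.+1 ^ (N ^ p) <= K * B.+1 ^ (K ^ p).
Proof. by move=> h; apply: leq_mul => //; apply: leq_pexp2l => //; apply: leq_expn2. Qed.

Theorem mainTheorem8 (P : class_prop) :
  hereditary_property P ->
  (forall C : gclass, plus_prop (plus_prop P) C <-> plus_prop P C) /\
  (forall C : gclass, plus_prop (star_prop P) C <-> star_prop P C).
Proof.
move=> [hPh hPd]; split=> C; split.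
- move=> [hC hdec]; split=> // p hp.
  have [K [Dp [hDp hd]]] := hdec p hp.
  have [K' [Ep [hEp hd']]] := hDp.2 p hp.
  have hE := hPh _ hEp.
  exists (K * K'.+1 ^ (K ^ p)), Ep; split=> // G hG.
  have [N [c [hN hall]]] := hd G hG.
  have [|N2 [c2 [hN2 h2]]] := @refine Ep hE G N K' p hp c.
    move=> ix; have [N' [c' [hN' hj]]] := hd' _ (hall ix).
    by exists N', c'.
  exists N2, c2; split=> //.
  by apply: (leq_trans hN2); apply: bound_mono.
- move=> hC; split; first exact: hC.1.
  move=> p hp; exists 1, C; split=> // G hG.
  exists 1, (fun _ => ord0); split=> // ix.
  exact: hC.1.2 G _ hG.
- move=> [hC hdec]; split=> // p hp.
  have [K [Dp [hDp hd]]] := hdec p hp.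
  have [f [hfn [hfs [Ep [hEp hd']]]]] := hDp.2 p hp.
  have hE := hPh _ hEp.
  exists (fun n => K * (f n).+1 ^ (K ^ p)); split.
    move=> m n hmn; apply: leq_mul => //; apply: leq_expn2; rewrite ltnS; exact: hfn.
  split; first exact: subpoly_g.
  exists Ep; split=> // G hG.
  have [N [c [hN hall]]] := hd G hG.
  have [|N2 [c2 [hN2 h2]]] := @refine Ep hE G N (f (gsize G)) p hp c.
    move=> ix; have [N' [c' [hN' hj]]] := hd' _ (hall ix).
    exists N', c'; split=> //.
    apply: (leq_trans hN'); apply: hfn => /=.
    by apply: leq_trans (max_card _) _; rewrite card_ord.
  exists N2, c2; split=> //.
  by apply: (leq_trans hN2); apply: bound_mono.
- move=> hC; split; first exact: hC.1.
  move=> p hp; exists 1, C; split=> // G hG.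
  exists 1, (fun _ => ord0); split=> // ix.
  exact: hC.1.2 G _ hG.
Qed.
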